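(* Let $A,B:[0,T]\to\mathrm{Sym}(n)$ be continuous with $B(t)$ positive definite and $A(t)$ negative semidefinite for all $t\in[0,T]$, and consider the natural quadratic Hamiltonian $H(t,p,q)=\frac12\big[\langle B(t)p,p\rangle+\langle A(t)q,q\rangle\big]$ on $[0,T]\times\mathbb R^{2n}$. Let $\psi$ be the fundamental solution of the linear Hamiltonian system $z'=J_0\nabla H(t,z)$, i.e. $\psi'=J_0\,\mathrm{diag}(B(t),A(t))\,\psi$, $\psi(0)=\mathrm{Id}$. Let $L_0\in\Lambda(n)$, $\ell(t)=\psi(t)L_0$ and $\mathrm{mul}(t_0)=\dim(\ell(t_0)\cap L_D)$. Then the set of $t_0\in[0,T]$ with $\mathrm{mul}(t_0)>0$ is finite and $$\sum_{t_0\in[0,T]}\mathrm{mul}(t_0)\le n.$$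
   Context: The standard symplectic space is $\mathbb R^{2n}=\mathbb R^n\oplus\mathbb R^n$ with coordinates $z=(p,q)$ ($p$ momentum, $q$ configuration), $\omega_0((p_1,q_1),(p_2,q_2))=\langle p_1,q_2\rangle-\langle q_1,p_2\rangle$, $J_0(p,q)=(-q,p)$ so that $z'=J_0\nabla H$ means $p'=-\nabla_qH$, $q'=\nabla_pH$; $\Lambda(n)$ is the Lagrangian Grassmannian and $L_D=\mathbb R^n\times\{0\}=\{(p,0):p\in\mathbb R^n\}$ is the Dirichlet Lagrangian. $\mathrm{Sym}(n)$ denotes real symmetric $n\times n$ matrices. *)

(* Defs.v *)
From HB Require Import structures.
From mathcomp Require Import all_boot all_order all_algebra.
From mathcomp Require Import all_classical all_reals all_analysis.
Set Implicit Arguments. Unset Strict Implicit. Unset Printing Implicit Defensive.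
Import Order.TTheory GRing.Theory Num.Theory.
Local Open Scope ring_scope.

(* Vectors of R^{2n} are row vectors z = (p, q) : 'rV_(n + n),
   p = lsubmx z (momentum), q = rsubmx z (configuration).
   Linear maps (matrices M : 'M_(n+n)) act on column vectors, i.e. the image
   of the row vector z is  z *m M^T. Subspaces are row spaces (%MS). *)

Section SymplecticDefs.
Variables (R : realType) (n : nat).

Definition omega0 (z1 z2 : 'rV[R]_(n + n)) : R :=
  (lsubmx z1 *m (rsubmx z2)^T - rsubmx z1 *m (lsubmx z2)^T) 0 0.

Definition lagrangian (L : 'M[R]_(n + n)) : Prop :=
  \rank L = n /\
  forall u v : 'rV[R]_(n + n), (u <= L)%MS -> (v <= L)%MS -> omega0 u v = 0.

Definition J0 : 'M[R]_(n + n) := block_mx 0 (- 1%:M) 1%:M 0.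

Definition LD : 'M[R]_(n, n + n) := row_mx 1%:M 0.

Definition sym_mx (M : 'M[R]_n) : Prop := M^T = M.
Definition posdef_mx (M : 'M[R]_n) : Prop :=
  sym_mx M /\ forall v : 'rV[R]_n, v != 0 -> 0 < (v *m M *m v^T) 0 0.
Definition negsemidef_mx (M : 'M[R]_n) : Prop :=
  sym_mx M /\ forall v : 'rV[R]_n, (v *m M *m v^T) 0 0 <= 0.

End SymplecticDefs.

(* Main.v *)
Require Import Defs.
From HB Require Import structures.
From mathcomp Require Import all_boot all_order all_algebra.
From mathcomp Require Import all_classical all_reals all_analysis.
Import Order.TTheory GRing.Theory Num.Theory numFieldNormedType.Exports.
Local Open Scope ring_scope.
Local Open Scope classical_set_scope.


Section Helpers.
Variable R : realType.

Lemma cwM (S : set R) (f g : R -> R) : {within S, continuous f} ->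
  {within S, continuous g} -> {within S, continuous (fun s => f s * g s)}.
Proof. by move=> hf hg x; apply: continuousM (hf x) (hg x). Qed.

Lemma cwC (S : set R) (c : R) : {within S, continuous (fun _ => c)}.
Proof. by move=> x; apply: cst_continuous. Qed.

Lemma cwS (S : set R) m (f : 'I_m -> R -> R) :
  (forall i, {within S, continuous (f i)}) ->
  {within S, continuous (fun s => \sum_i f i s)}.
Proof.
elim: m f => [|m IH] f hf.
  have -> : (fun s => \sum_(i < 0) f i s) = (fun _ => 0).
    by apply/funext => s; rewrite big_ord0.
  exact: cwC.
have -> : (fun s => \sum_(i < m.+1) f i s) =
  (fun s => \sum_(i < m) f (widen_ord (leqnSn m) i) s + f ord_max s).
  by apply/funext => s; rewrite big_ord_recr.
move=> x; apply: continuousD; last exact: hf.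
exact: (IH (fun i => f (widen_ord (leqnSn m) i))).
Qed.

Lemma dM (f g : R -> R) (t df dg : R) : is_derive t 1 f df -> is_derive t 1 g dg ->
  is_derive t 1 (fun s => f s * g s) (df * g t + f t * dg).
Proof.
move=> hf hg; apply: is_derive_eq (is_deriveM hf hg) _.
by rewrite addrC [df * _]mulrC.
Qed.

Lemma dS m (h : 'I_m -> R -> R) (t : R) (dh : 'I_m -> R) :
  (forall i, is_derive t 1 (h i) (dh i)) ->
  is_derive t 1 (fun s => \sum_i h i s) (\sum_i dh i).
Proof.
move=> hh; have -> : (fun s => \sum_i h i s) = \sum_i h i.
  by apply/funext => s; rewrite fct_sumE.
exact: is_derive_sum.
Qed.

End Helpers.
Arguments dM {R f g t df dg}.
Arguments dS {R m h t dh}.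


Section Bil.
Variables (R : realType) (N : nat).

Lemma bilE (a b : 'rV[R]_N) (G : 'M[R]_N) :
  (a *m G *m b^T) 0 0 = \sum_j (\sum_l a 0 l * G l j) * b 0 j.
Proof.
rewrite mxE; apply: eq_bigr => j _; rewrite !mxE; congr (_ * _).
Qed.

Lemma bil_der (a b : R -> 'rV[R]_N) (da db : 'rV[R]_N) G (t : R) :
 (forall j, is_derive t 1 (fun s => a s 0 j) (da 0 j)) ->
 (forall j, is_derive t 1 (fun s => b s 0 j) (db 0 j)) ->
 is_derive t 1 (fun s => (a s *m G *m (b s)^T) 0 0)
   ((da *m G *m (b t)^T + a t *m G *m db^T) 0 0).
Proof.
move=> ha hb.
have -> : (fun s => (a s *m G *m (b s)^T) 0 0) =
  (fun s => \sum_j (\sum_l a s 0 l * G l j) * b s 0 j).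
  by apply/funext => s; rewrite bilE.
apply: is_derive_eq.
  apply: dS => j; apply: dM (hb j).
  apply: dS => l; apply: dM (ha l) (is_derive_cst _ _ _).
rewrite mxE !bilE -big_split /=; apply: eq_bigr => j _.
by congr (_ * _ + _); apply: eq_bigr => l _; rewrite scaler0 add0r [_ *: _]mulrC.
Qed.

Lemma bil_cont (S : set R) (a b : R -> 'rV[R]_N) G :
 (forall j, {within S, continuous (fun s => a s 0 j)}) ->
 (forall j, {within S, continuous (fun s => b s 0 j)}) ->
 {within S, continuous (fun s => (a s *m G *m (b s)^T) 0 0)}.
Proof.
move=> ha hb.
have -> : (fun s => (a s *m G *m (b s)^T) 0 0) =
  (fun s => \sum_j (\sum_l a s 0 l * G l j) * b s 0 j).
  by apply/funext => s; rewrite bilE.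
apply: cwS => j; apply: cwM; last exact: hb.
apply: cwS => l; apply: cwM; [exact: ha | exact: cwC].
Qed.

End Bil.


Section Alg.
Variables (R : realType) (n : nat).

Definition WW : 'M[R]_(n + n) := block_mx 0 1%:M (-1%:M) 0.
Definition GH : 'M[R]_(n + n) := block_mx 0 1%:M 0 0.

Lemma rowW (p q : 'rV[R]_n) : row_mx p q *m WW = row_mx (- q) p.
Proof.
by rewrite /WW mul_row_block !mulmx0 !mulmx1 mulmxN mulmx1 add0r addr0.
Qed.

Lemma rowGH (p q : 'rV[R]_n) : row_mx p q *m GH = row_mx 0 p.
Proof.
by rewrite /GH mul_row_block !mulmx0 !mulmx1 !addr0.
Qed.

Lemma row_dot (a b c d : 'rV[R]_n) :
  row_mx a b *m (row_mx c d)^T = a *m c^T + b *m d^T.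
Proof. by rewrite tr_row_mx mul_row_col. Qed.

Lemma omegaE (u v : 'rV[R]_(n + n)) : omega0 u v = (u *m WW *m v^T) 0 0.
Proof.
rewrite /omega0 -[u in RHS]hsubmxK -[v in RHS]hsubmxK rowW row_dot.
by rewrite mulNmx addrC.
Qed.

Lemma trN1 : (- 1%:M : 'M[R]_n)^T = - 1%:M.
Proof. by apply/matrixP => i j; rewrite !mxE eq_sym. Qed.

Lemma dx_form (p q : 'rV[R]_n) Bm Am : Bm^T = Bm -> Am^T = Am ->
  row_mx p q *m (J0 R n *m block_mx Bm 0 0 Am)^T = row_mx (- (q *m Am)) (p *m Bm).
Proof.
move=> hB hA; rewrite trmx_mul /J0 !tr_block_mx hB hA !trmx0 trN1 trmx1.
rewrite mulmxA mul_row_block !mulmx0 !addr0 !add0r mul_row_block.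
by rewrite !mulmx0 !mulmxN !mulmx1 !addr0 add0r.
Qed.

Lemma sympl0 (p q p' q' : 'rV[R]_n) Bm Am : Bm^T = Bm -> Am^T = Am ->
  row_mx (- (q *m Am)) (p *m Bm) *m WW *m (row_mx p' q')^T +
  row_mx p q *m WW *m (row_mx (- (q' *m Am)) (p' *m Bm))^T = 0.
Proof.
move=> hB hA; rewrite !rowW !row_dot linearN /= !trmx_mul hA hB.
rewrite !mulNmx !mulmxN opprK !mulmxA -opprD addrC.
by rewrite [X in X - _]addrC subrr.
Qed.

Lemma hder_form (p q : 'rV[R]_n) Bm Am : Bm^T = Bm ->
  row_mx (- (q *m Am)) (p *m Bm) *m GH *m (row_mx p q)^T +
  row_mx p q *m GH *m (row_mx (- (q *m Am)) (p *m Bm))^T =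
  p *m Bm *m p^T - q *m Am *m q^T.
Proof.
move=> hB; rewrite !rowGH !row_dot !mul0mx !add0r trmx_mul hB mulmxA.
by rewrite mulNmx addrC.
Qed.

End Alg.


Section Main.
Variables (R : realType) (n : nat) (T : R) (A B : R -> 'M[R]_n)
  (psi : R -> 'M[R]_(n + n)).
Hypothesis HB : forall t, 0 <= t <= T -> posdef_mx (B t).
Hypothesis HA : forall t, 0 <= t <= T -> negsemidef_mx (A t).
Hypothesis Hpsi0 : psi 0 = 1%:M.
Hypothesis Hpc : forall i j, {within `[0, T], continuous (fun t => psi t i j)}.
Hypothesis Hpd : forall t, 0 < t < T -> forall i j,
      is_derive t 1 (fun s => psi s i j)
        ((J0 R n *m block_mx (B t) 0 0 (A t) *m psi t) i j).

Definition MM t := J0 R n *m block_mx (B t) 0 0 (A t).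
Definition xx (u : 'rV[R]_(n + n)) t := u *m (psi t)^T.
Definition pp u t := lsubmx (xx u t).
Definition qq u t := rsubmx (xx u t).

Lemma xxE u t j : xx u t 0 j = \sum_k u 0 k * psi t j k.
Proof. by rewrite /xx mxE; apply: eq_bigr => k _; rewrite mxE. Qed.

Lemma xx_cont u j : {within `[0, T], continuous (fun s => xx u s 0 j)}.
Proof.
have -> : (fun s => xx u s 0 j) = (fun s => \sum_k u 0 k * psi s j k).
  by apply/funext => s; rewrite xxE.
apply: cwS => k; apply: cwM; [exact: cwC | exact: Hpc].
Qed.

Lemma xx_der u t j : 0 < t < T ->
  is_derive t 1 (fun s => xx u s 0 j) ((xx u t *m (MM t)^T) 0 j).
Proof.
move=> ht.
have -> : (fun s => xx u s 0 j) = (fun s => \sum_k u 0 k * psi s j k).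
  by apply/funext => s; rewrite xxE.
apply: is_derive_eq.
  apply: dS => k.
  have h0 : is_derive t 1 (fun _ : R => u 0 k) 0 := is_derive_cst _ _ _.
  exact: (dM h0 (Hpd t ht j k)).
rewrite /xx -[in RHS]mulmxA -[in RHS]trmx_mul [RHS]mxE; apply: eq_bigr => k _.
rewrite [in RHS]mxE /MM; set z := (_ * psi t j k); have -> : z = 0 by rewrite /z mul0r.
by rewrite add0r.
Qed.


Lemma FF_der u w G t : 0 < t < T ->
  is_derive t 1 (fun s => (xx u s *m G *m (xx w s)^T) 0 0)
   ((xx u t *m (MM t)^T *m G *m (xx w t)^T +
     xx u t *m G *m (xx w t *m (MM t)^T)^T) 0 0).
Proof.
move=> ht; apply: bil_der => j; exact: xx_der.
Qed.

Lemma FF_cont (S : set R) u w G : S `<=` `[0, T] ->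
  {within S, continuous (fun s => (xx u s *m G *m (xx w s)^T) 0 0)}.
Proof.
move=> hS; apply: (continuous_subspaceW hS).
by apply: bil_cont => j; apply: xx_cont.
Qed.

Lemma symB t : 0 <= t <= T -> (B t)^T = B t.
Proof. by move=> /HB []. Qed.
Lemma symA t : 0 <= t <= T -> (A t)^T = A t.
Proof. by move=> /HA []. Qed.

Lemma xx_split u t : xx u t = row_mx (pp u t) (qq u t).
Proof. by rewrite hsubmxK. Qed.

Lemma dx_eq u t : 0 <= t <= T ->
  xx u t *m (MM t)^T = row_mx (- (qq u t *m A t)) (pp u t *m B t).
Proof.
move=> ht; rewrite /MM {1}xx_split dx_form //; [exact: symB | exact: symA].
Qed.

Lemma sub0T t : t <= T -> `[0, t] `<=` `[0, T].
Proof.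
move=> tT x /=; rewrite !in_itv /= => /andP[-> xt] /=; exact: le_trans xt tT.
Qed.

Lemma oo_cc a b t : 0 <= a -> b <= T -> t \in `]a, b[%R -> 0 <= t <= T.
Proof.
move=> ha hb; rewrite in_itv /= => /andP[h1 h2].
by rewrite (le_trans ha (ltW h1)) (le_trans (ltW h2) hb).
Qed.

Lemma oo_oo a b t : 0 <= a -> b <= T -> t \in `]a, b[%R -> 0 < t < T.
Proof.
move=> ha hb; rewrite in_itv /= => /andP[h1 h2].
by rewrite (le_lt_trans ha h1) (lt_le_trans h2 hb).
Qed.

Lemma sympl_const u w t : 0 <= t <= T ->
  (xx u t *m WW R n *m (xx w t)^T) 0 0 = (u *m WW R n *m w^T) 0 0.
Proof.
move=> /andP[t0 tT].
set f := (fun s => (xx u s *m WW R n *m (xx w s)^T) 0 0).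
have hd : forall x, x \in `]0, t[%R -> is_derive x 1 f ((fun _ => 0) x).
  move=> x hx; apply: is_derive_eq; first exact: (FF_der u w (WW R n) x (oo_oo _ _ _ (lexx 0) tT hx)).
  have hx' := oo_cc _ _ _ (lexx 0) tT hx.
  rewrite (dx_eq u x hx') (dx_eq w x hx') (xx_split u) (xx_split w).
  by rewrite sympl0 ?mxE //; [exact: symB | exact: symA].
have hc : {within `[0, t], continuous f} := (FF_cont _ u w (WW R n) (sub0T t tT)).
have [c _] := MVT_segment t0 hd hc.
rewrite mul0r => /eqP; rewrite subr_eq0 => /eqP; rewrite /f => ->.
by rewrite /xx Hpsi0 trmx1 !mulmx1.
Qed.


Lemma xx0 u t : 0 <= t <= T -> xx u t = 0 -> u = 0.
Proof.
move=> ht hx.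
have hW : u *m WW R n = 0.
  apply/rowP => j.
  have E := sympl_const u (delta_mx 0 j) t ht.
  rewrite hx !mul0mx trmx_delta -colE [in LHS]mxE [in RHS]mxE in E.
  by rewrite [in RHS]mxE E.
move: hW; rewrite -(hsubmxK u) rowW -row_mx0 => /eq_row_mx [h1 ->].
by rewrite -[rsubmx u]opprK h1 oppr0.
Qed.

Lemma psi_unit t : 0 <= t <= T -> (psi t)^T \in unitmx.
Proof.
move=> ht; rewrite -row_free_unit -kermx_eq0; apply/eqP/row_matrixP => i.
rewrite row0; apply: (xx0 _ t ht).
by rewrite /xx -row_mul mulmx_ker row0.
Qed.


Definition hh u t := (pp u t *m (qq u t)^T) 0 0.
Definition ff u := fun s => (xx u s *m GH R n *m (xx u s)^T) 0 0.

Lemma ffE u t : ff u t = hh u t.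
Proof. by rewrite /ff xx_split rowGH row_dot mul0mx add0r. Qed.

Lemma ff_der u t : 0 < t < T ->
  is_derive t 1 (ff u)
    ((pp u t *m B t *m (pp u t)^T) 0 0 - (qq u t *m A t *m (qq u t)^T) 0 0).
Proof.
move=> ht; have ht' : 0 <= t <= T.
  by case/andP: ht => h1 h2; rewrite !ltW.
apply: is_derive_eq; first exact: (FF_der u u (GH R n) t ht).
rewrite (dx_eq u t ht') (xx_split u) hder_form; last exact: symB.
by rewrite [LHS]mxE; congr (_ + _); rewrite mxE.
Qed.

Lemma quad_ge0 u t : 0 <= t <= T ->
  0 <= (pp u t *m B t *m (pp u t)^T) 0 0 - (qq u t *m A t *m (qq u t)^T) 0 0.
Proof.
move=> ht; rewrite subr_ge0; apply: (@le_trans _ _ 0).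
  by case: (HA t ht) => _ ->.
case: (HB t ht) => _ hpos; have [->|nz] := eqVneq (pp u t) 0.
  by rewrite !mul0mx mxE.
exact/ltW/hpos.
Qed.

Lemma hh_mono u a b : 0 <= a -> a <= b -> b <= T -> hh u a <= hh u b.
Proof.
move=> a0 ab bT; rewrite -!ffE.
have a1 : a \in `[0, T]%R by rewrite in_itv /= a0 (le_trans ab bT).
have b1 : b \in `[0, T]%R by rewrite in_itv /= bT (le_trans a0 ab).
apply: (ger0_derive1_le_cc _ _ _ a1 b1 ab).
- move=> x hx; exact: (@ex_derive _ _ _ _ _ _ _ (ff_der u x (oo_oo _ _ _ (lexx 0) (lexx T) hx))).
- move=> x hx; rewrite derive1E (@derive_val _ _ _ _ _ _ _ (ff_der u x (oo_oo _ _ _ (lexx 0) (lexx T) hx))).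
  exact: quad_ge0 (oo_cc _ _ _ (lexx 0) (lexx T) hx).
- exact: (FF_cont _ u u (GH R n) (@subset_refl _ _)).
Qed.


Lemma subcc c d : 0 <= c -> d <= T -> `[c, d] `<=` `[0, T].
Proof.
move=> c0 dT x /=; rewrite !in_itv /= => /andP[h1 h2].
by rewrite (le_trans c0 h1) (le_trans h2 dT).
Qed.

Lemma hh_strict u a b : 0 <= a -> a < b -> b <= T -> hh u a = hh u b ->
  qq u b = 0 -> u = 0.
Proof.
move=> a0 ab bT heq hqb.
have hin x : x \in `]a, b[%R -> 0 <= x <= T := oo_cc a b x a0 bT.
have hin' x : x \in `]a, b[%R -> 0 < x < T := oo_oo a b x a0 bT.
have hconst x : x \in `]a, b[%R -> hh u x = hh u a.
  move=> hx; have := hx; rewrite in_itv /= => /andP[ax xb].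
  apply/eqP; rewrite eq_le (hh_mono u a x a0 (ltW ax) (le_trans (ltW xb) bT)) andbT heq.
  exact: (hh_mono u x b (le_trans a0 (ltW ax)) (ltW xb) bT).
have hp x : x \in `]a, b[%R -> pp u x = 0.
  move=> hx.
  have d0 : is_derive x 1 (ff u) 0.
    apply: (derive1_at_max (ltW ab) _ hx).
      move=> y hy; exact: (@ex_derive _ _ _ _ _ _ _ (ff_der u y (hin' y hy))).
    by move=> y hy; rewrite !ffE (hconst _ hy) (hconst _ hx).
  have d1 := ff_der u x (hin' x hx).
  have E := @derive_val _ _ _ _ _ _ _ d1.
  rewrite (@derive_val _ _ _ _ _ _ _ d0) in E.
  have [//|nz] := eqVneq (pp u x) 0.
  case: (HB x (hin x hx)) => _ /(_ _ nz) hpos.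
  case: (HA x (hin x hx)) => _ /(_ (qq u x)) hneg.
  have : 0 < (pp u x *m B x *m (pp u x)^T) 0 0 - (qq u x *m A x *m (qq u x)^T) 0 0.
    by rewrite subr_gt0 (le_lt_trans hneg hpos).
  by rewrite -E ltxx.
have hq x : x \in `]a, b[%R -> qq u x = 0.
  move=> hx; have := hx; rewrite in_itv /= => /andP[ax xb].
  apply/rowP => j; rewrite [RHS]mxE.
  have -> : (0 : R) = qq u b 0 j by rewrite hqb mxE.
  rewrite /qq [LHS]mxE [RHS]mxE.
  set f := fun s => xx u s 0 (rshift n j).
  have hd : forall y, y \in `]x, b[%R -> is_derive y 1 f ((fun _ => 0) y).
    move=> y hy.
    have hy' : y \in `]a, b[%R.
      by move: hy; rewrite !in_itv /= => /andP[h1 ->]; rewrite (lt_trans ax h1).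
    apply: is_derive_eq; first exact: (xx_der u y _ (hin' y hy')).
    by rewrite (dx_eq u y (hin y hy')) row_mxEr (hp y hy') !mul0mx mxE.
  have hc : {within `[x, b], continuous f}.
    apply: (continuous_subspaceW (subcc x b (le_trans a0 (ltW ax)) bT)).
    exact: xx_cont.
  have [c _] := MVT_segment (ltW xb) hd hc.
  by rewrite mul0r => /eqP; rewrite subr_eq0 => /eqP; rewrite /f => ->.
have hm := mid_in_itvoo ab.
apply: (xx0 u _ (hin _ hm)).
by rewrite xx_split (hp _ hm) (hq _ hm) row_mx0.
Qed.


Lemma LD_sub (v : 'rV[R]_(n + n)) : (v <= LD R n)%MS = (rsubmx v == 0).
Proof.
apply/idP/idP.
  by case/submxP => D ->; rewrite /LD mul_mx_row mulmx1 mulmx0 row_mxKr.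
move/eqP => h; rewrite -(hsubmxK v) h; apply/submxP; exists (lsubmx v).
by rewrite /LD mul_mx_row mulmx1 mulmx0.
Qed.

Variable L0 : 'M[R]_(n + n).
Hypothesis HL0 : lagrangian L0.

Definition KK t := (((L0 *m (psi t)^T) :&: LD R n)%MS *m invmx ((psi t)^T)).

Lemma KK_sub t z : 0 <= t <= T ->
  (z <= KK t)%MS = (z <= L0)%MS && (qq z t == 0).
Proof.
move=> ht; have hu := psi_unit t ht.
have hf : row_free (psi t)^T by rewrite row_free_unit.
rewrite -(submxMfree z (KK t) hf) /KK -mulmxA mulVmx // mulmx1 sub_capmx.
by rewrite (submxMfree _ _ hf) LD_sub.
Qed.

Lemma KK_rank t : 0 <= t <= T ->
  \rank (KK t) = \rank ((L0 *m (psi t)^T) :&: LD R n)%MS.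
Proof.
move=> ht; apply: mxrankMfree.
by rewrite row_free_unit unitmx_inv psi_unit.
Qed.

Lemma KK_L0 t : 0 <= t <= T -> (KK t <= L0)%MS.
Proof.
move=> ht; apply/row_subP => i.
by have := row_sub i (KK t); rewrite KK_sub // => /andP[].
Qed.

Lemma hh_add w v t : 0 <= t <= T -> (w <= KK t)%MS -> (v <= L0)%MS ->
  hh (w + v) t = hh v t.
Proof.
move=> ht hw hv; move: (hw); rewrite KK_sub // => /andP[hwL /eqP hq].
have E : (pp w t *m (qq v t)^T - qq w t *m (pp v t)^T) 0 0 = 0.
  rewrite -[LHS]/(omega0 (xx w t) (xx v t)) omegaE sympl_const // -omegaE.
  by case: HL0 => _ ->.
rewrite hq mul0mx subr0 in E.
have Hp : pp (w + v) t = pp w t + pp v t by rewrite /pp /xx mulmxDl linearD.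
have Hq : qq (w + v) t = qq w t + qq v t by rewrite /qq /xx mulmxDl linearD.
by rewrite /hh Hp Hq hq add0r mulmxDl mxE E add0r.
Qed.

Definition VV (s : seq R) := (\sum_(t <- s) KK t)%MS.

Lemma VV_L0 s : (forall x, x \in s -> 0 <= x <= T) -> (VV s <= L0)%MS.
Proof.
elim: s => [|x s IH] hs; first by rewrite /VV big_nil sub0mx.
rewrite /VV big_cons addsmx_sub KK_L0 ?hs ?mem_head //=.
by apply: IH => y hy; apply: hs; rewrite in_cons hy orbT.
Qed.

Lemma hh_KK u t : 0 <= t <= T -> (u <= KK t)%MS -> hh u t = 0.
Proof.
by move=> ht; rewrite KK_sub // => /andP[_ /eqP hq]; rewrite /hh hq trmx0 mulmx0 mxE.
Qed.

Lemma Nneg s : sorted <%R s -> (forall x, x \in s -> 0 <= x <= T) ->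
  forall t u, 0 <= t -> (forall x, x \in s -> t < x) ->
  (u <= VV s)%MS -> u != 0 -> hh u t < 0.
Proof.
elim: s => [|t1 s IH] hsort hs t u t0 hts hu nz.
  by move: hu; rewrite /VV big_nil submx0 (negbTE nz).
have ht1 : 0 <= t1 <= T by apply: hs; rewrite mem_head.
have tt1 : t < t1 by apply: hts; rewrite mem_head.
have hs' : forall x, x \in s -> 0 <= x <= T.
  by move=> x hx; apply: hs; rewrite in_cons hx orbT.
have hsort' : sorted <%R s := path_sorted hsort.
have hall : forall x, x \in s -> t1 < x.
  by move=> x; apply/allP; apply: (order_path_min lt_trans hsort).
move: hu; rewrite /VV big_cons => /sub_addsmxP [[a1 a2] /= hu].
set w := a1 *m KK t1 in hu; set v := a2 *m _ in hu.
have hw : (w <= KK t1)%MS by apply: submxMl.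
have hv : (v <= VV s)%MS by apply: submxMl.
have hvL : (v <= L0)%MS := submx_trans hv (VV_L0 s hs').
have hm : hh u t <= hh u t1.
  by case/andP: ht1 => _ h; apply: hh_mono => //; apply: ltW.
have he : hh u t1 = hh v t1 by rewrite hu hh_add.
have [v0|vnz] := eqVneq v 0.
  have hhu : hh u t1 = 0 by rewrite he v0 (hh_KK _ _ ht1) ?sub0mx.
  rewrite lt_neqAle -hhu hm andbT; apply/eqP => heq.
  have hqu : qq u t1 = 0.
    by move: (hw); rewrite -[w]addr0 -v0 -hu KK_sub // => /andP[_ /eqP].
  have t1T : t1 <= T by case/andP: ht1.
  by move/eqP: nz; apply; apply: (hh_strict u t t1 t0 tt1 t1T heq hqu).
apply: (le_lt_trans hm); rewrite he.
exact: (IH hsort' hs' t1 v (le_trans t0 (ltW tt1)) hall hv vnz).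
Qed.



Lemma rank_VV s : sorted <%R s -> (forall x, x \in s -> 0 <= x <= T) ->
  \rank (VV s) = (\sum_(t <- s) \rank (KK t))%N.
Proof.
elim: s => [|t1 s IH] hsort hs; first by rewrite /VV !big_nil mxrank0.
have ht1 : 0 <= t1 <= T by apply: hs; rewrite mem_head.
have hs' : forall x, x \in s -> 0 <= x <= T.
  by move=> x hx; apply: hs; rewrite in_cons hx orbT.
have hsort' : sorted <%R s := path_sorted hsort.
have hall : forall x, x \in s -> t1 < x.
  by move=> x; apply/allP; apply: (order_path_min lt_trans hsort).
have hcap : (KK t1 :&: VV s)%MS = 0.
  apply/eqP; rewrite -submx0; apply/row_subP => i.
  set r := row i _.
  have hr : (r <= KK t1 :&: VV s)%MS by apply: row_sub.
  rewrite sub_capmx in hr; case/andP: hr => hr1 hr2.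
  have [->|nz] := eqVneq r 0; first by rewrite sub0mx.
  have := Nneg s hsort' hs' t1 r (proj1 (andP ht1)) hall hr2 nz.
  by rewrite (hh_KK _ _ ht1 hr1) ltxx.
rewrite /VV !big_cons -/(VV s).
have := mxrank_sum_cap (KK t1) (VV s); rewrite hcap mxrank0 addn0 => ->.
by rewrite IH.
Qed.

Lemma sum_le s : uniq s -> (forall x, x \in s -> 0 <= x <= T) ->
  (\sum_(t <- s) \rank ((L0 *m (psi t)^T) :&: LD R n)%MS <= n)%N.
Proof.
move=> us hs.
set s2 := sort <=%O s.
have hp : perm_eq s2 s by rewrite perm_sort.
have hs2 : forall x, x \in s2 -> 0 <= x <= T by move=> x; rewrite (perm_mem hp); apply: hs.
rewrite -(perm_big _ hp) big_seq (eq_bigr (fun t => \rank (KK t))); last first.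
  by move=> t ht; rewrite KK_rank // hs2.
rewrite -big_seq -rank_VV ?sort_lt_sorted //.
apply: (leq_trans (mxrankS (VV_L0 _ hs2))); by case: HL0 => -> _.
Qed.

End Main.

Theorem theorem3p9 (R : realType) (n : nat) (T : R)
  (A B : R -> 'M[R]_n) (psi : R -> 'M[R]_(n + n)) (L0 : 'M[R]_(n + n)) :
  (forall i j, {within `[0, T]%classic, continuous (fun t => A t i j)}) ->
  (forall i j, {within `[0, T]%classic, continuous (fun t => B t i j)}) ->
  (forall t, 0 <= t <= T -> posdef_mx (B t)) ->
  (forall t, 0 <= t <= T -> negsemidef_mx (A t)) ->
  (* psi is the fundamental solution: psi(0) = Id, psi continuous on [0,T],
     psi' = J0 diag(B(t), A(t)) psi on ]0,T[ *)
  psi 0 = 1%:M ->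
  (forall i j, {within `[0, T]%classic, continuous (fun t => psi t i j)}) ->
  (forall t, 0 < t < T -> forall i j,
      is_derive t 1 (fun s => psi s i j)
        ((J0 R n *m block_mx (B t) 0 0 (A t) *m psi t) i j)) ->
  lagrangian L0 ->
  let mul t := \rank ((L0 *m (psi t)^T) :&: LD R n)%MS in
  exists s : seq R,
    [/\ uniq s,
        (forall t, t \in s <-> (0 <= t <= T /\ (0 < mul t)%N)) &
        (\sum_(t <- s) mul t <= n)%N].
Proof.
move=> _ _ hB hA h0 hc hd hL mul.
have hle := @sum_le R n T A B psi hB hA h0 hc hd L0 hL.
pose P t := 0 <= t <= T /\ (0 < mul t)%N.
have hsz : forall s, uniq s -> (forall t, t \in s -> P t) -> (size s <= n)%N.
  move=> s us hs; apply: leq_trans (hle s us (fun t ht => proj1 (hs t ht))).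
  rewrite -sum1_size big_seq [X in (_ <= X)%N]big_seq; apply: leq_sum => t ht.
  exact: (proj2 (hs t ht)).
have [ex|nex] := pselect (exists s, [/\ uniq s, (forall t, t \in s -> P t) &
                                   (forall t, P t -> t \in s)]).
  case: ex => s [us h1 h2]; exists s; split => //.
    by move=> t; split; [apply: h1 | apply: h2].
  by apply: hle => // t /h1 [].
exfalso.
have ext : forall s, uniq s -> (forall t, t \in s -> P t) ->
    exists t, P t /\ t \notin s.
  move=> s us hs; apply: contrapT => hne; apply: nex; exists s; split => //.
  move=> t Pt; apply: contrapT => tn; apply: hne; exists t; split => //.
  by apply/negP.
have build : forall k, exists s, [/\ uniq s, (forall t, t \in s -> P t) & size s = k].
  elim=> [|k [s [us hs sz]]]; first by exists [::].
  have [t [Pt tn]] := ext s us hs.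
  exists (t :: s); split => /=; first by rewrite tn us.
    by move=> x; rewrite in_cons => /orP[/eqP -> //|]; apply: hs.
  by rewrite sz.
have [s [us hs sz]] := build n.+1.
by have := hsz s us hs; rewrite sz ltnn.
Qed.
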